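(* Let $X$ be a graph with bounded geometry and let $\phi:X\to G$ be an injective $(a,b)$-rough isometry to a Cayley graph $(G,S)$ of a group of polynomial volume growth. Then there exist constants $0<C_1<1$, $C_2>0$ and $R_1$ such that for all $y\in G$ and $p\in X$ with $d^S(\phi(p),y)\leq b$, and all $R\geq R_1$, $$|B_p^X(R)|\geq C_2\,|B_y^G(C_1R)|.$$
   Context: Graphs are connected, locally finite, without self-loops or multiple edges; $d^X$ is the path-length metric on $X$; bounded geometry means all vertex degrees are at most some $\Delta$. For a group $G$ with finite symmetric generating set $S$, the Cayley graph has $x\sim y$ iff $x=ys$ for some $s\in S$, with word metric $d^S$. $G$ has polynomial volume growth if $|B^G_e(n)|\leq Cn^A$ for some $C,A>0$ and all $n\geq1$. $B_p^X(R)=\{x\in X:d^X(x,p)\leq R\}$, $B_y^G(R)=\{z\in G:d^S(z,y)\leq R\}$, and $|\cdot|$ denotes cardinality. An $(a,b)$-rough isometry ($a\geq 1,b\geq0$) is a map $\phi$ with $a^{-1}d^X(x,y)-b\leq d^S(\phi(x),\phi(y))\leq a\,d^X(x,y)+b$ for all $x,y\in X$ and $d^S(z,\phi(X))\leq b$ for all $z\in G$. *)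

(* Defs.v *)
From Stdlib Require Import Reals Lra List ClassicalEpsilon.
Import ListNotations.
Open Scope R_scope.

Inductive walk {V : Type} (adj : V -> V -> Prop) : nat -> V -> V -> Prop :=
| walk0 : forall x, walk adj 0 x x
| walkS : forall n x y z, adj x y -> walk adj n y z -> walk adj (S n) x z.

(* Path-length metric: the least length of a walk from x to y
   (an arbitrary value if x and y are not connected; all graphs considered
   below are connected). *)
Definition gdist {V : Type} (adj : V -> V -> Prop) (x y : V) : nat :=
  epsilon (inhabits 0%nat)
    (fun n => walk adj n x y /\ forall m, walk adj m x y -> (n <= m)%nat).

(* Cardinality of a finite set (arbitrary value for infinite sets). *)
Definition ncard {T : Type} (A : T -> Prop) : nat :=
  epsilon (inhabits 0%nat)
    (fun n => exists l : list T, NoDup l /\ length l = n /\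
                 forall x, In x l <-> A x).

Definition is_finite {T : Type} (A : T -> Prop) : Prop :=
  exists l : list T, forall x, A x -> In x l.

Definition is_graph {V : Type} (adj : V -> V -> Prop) : Prop :=
  (forall x y, adj x y -> adj y x) /\
  (forall x, ~ adj x x) /\
  (forall x, is_finite (adj x)) /\
  (forall x y, exists n, walk adj n x y).

Definition bounded_geometry {V : Type} (adj : V -> V -> Prop) : Prop :=
  exists Delta : nat, forall x, (ncard (adj x) <= Delta)%nat.

Definition ball {V : Type} (adj : V -> V -> Prop) (p : V) (r : R) : V -> Prop :=
  fun x => INR (gdist adj x p) <= r.

Definition is_group {G : Type} (mul : G -> G -> G) (one : G) (inv : G -> G) : Prop :=
  (forall x y z, mul x (mul y z) = mul (mul x y) z) /\
  (forall x, mul one x = x) /\ (forall x, mul x one = x) /\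
  (forall x, mul (inv x) x = one) /\ (forall x, mul x (inv x) = one).

Definition sym_generating {G : Type} (mul : G -> G -> G) (one : G) (inv : G -> G)
  (S : list G) : Prop :=
  (forall s, In s S -> In (inv s) S) /\
  (forall g, exists w : list G, Forall (fun s => In s S) w /\ g = fold_right mul one w).

Definition cayley_adj {G : Type} (mul : G -> G -> G) (S : list G) (x y : G) : Prop :=
  exists s, In s S /\ x = mul y s.

Definition poly_growth {G : Type} (mul : G -> G -> G) (one : G) (S : list G) : Prop :=
  exists C A : R, 0 < C /\ 0 < A /\
    forall n : nat, (1 <= n)%nat ->
      INR (ncard (ball (cayley_adj mul S) one (INR n))) <= C * Rpower (INR n) A.

Definition rough_isom {V G : Type} (adjX : V -> V -> Prop) (adjG : G -> G -> Prop)
  (a b : R) (phi : V -> G) : Prop :=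
  1 <= a /\ 0 <= b /\
  (forall x y,
      / a * INR (gdist adjX x y) - b <= INR (gdist adjG (phi x) (phi y)) /\
      INR (gdist adjG (phi x) (phi y)) <= a * INR (gdist adjX x y) + b) /\
  (forall z, exists x, INR (gdist adjG z (phi x)) <= b).

(* Main.v *)
Require Import Defs.
From Stdlib Require Import Reals List Lra Lia ZArith Classical ClassicalEpsilon.
Open Scope R_scope.

Section Walks.
Context {V : Type} (adj : V -> V -> Prop).

Lemma walk_snoc n x y z : walk adj n x y -> adj y z -> walk adj (S n) x z.
Proof.
  induction 1; intros.
  - apply walkS with z; [assumption| apply walk0].
  - apply walkS with y; auto.
Qed.

Lemma walk_app n m x y z : walk adj n x y -> walk adj m y z -> walk adj (n + m) x z.
Proof.
  induction 1; intros; simpl; auto.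
  apply walkS with y; auto.
Qed.

Lemma walk_rev n x y : (forall u v, adj u v -> adj v u) -> walk adj n x y -> walk adj n y x.
Proof.
  intros Hs; induction 1. apply walk0.
  apply walk_snoc with y; auto.
Qed.

Lemma min_exists (P : nat -> Prop) : (exists n, P n) -> exists n, P n /\ forall m, P m -> (n <= m)%nat.
Proof.
  intros [n Hn]. revert Hn. induction n as [n IH] using (well_founded_induction Wf_nat.lt_wf).
  intros Hn. destruct (classic (exists m, (m < n)%nat /\ P m)) as [[m [Hm Pm]]|Hno].
  - exact (IH m Hm Pm).
  - exists n; split; auto. intros m Pm. destruct (Nat.le_gt_cases n m); auto.
    exfalso; apply Hno; eauto.
Qed.

Lemma gdist_spec x y : (exists n, walk adj n x y) ->
  walk adj (gdist adj x y) x y /\ forall m, walk adj m x y -> (gdist adj x y <= m)%nat.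
Proof.
  intros H. unfold gdist. apply epsilon_spec.
  apply min_exists with (P := fun n => walk adj n x y); auto.
Qed.

Hypothesis conn : forall x y, exists n, walk adj n x y.

Lemma gdist_tri x y z : (gdist adj x z <= gdist adj x y + gdist adj y z)%nat.
Proof.
  destruct (gdist_spec x y (conn x y)) as [W1 _].
  destruct (gdist_spec y z (conn y z)) as [W2 _].
  destruct (gdist_spec x z (conn x z)) as [_ M].
  apply M. apply walk_app with y; auto.
Qed.

Lemma gdist_sym x y : (forall u v, adj u v -> adj v u) -> gdist adj x y = gdist adj y x.
Proof.
  intros Hs.
  destruct (gdist_spec x y (conn x y)) as [W1 M1].
  destruct (gdist_spec y x (conn y x)) as [W2 M2].
  apply Nat.le_antisymm; [apply M1 | apply M2]; apply walk_rev; auto.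
Qed.
End Walks.

Lemma exists_nodup_sub {T : Type} (A : T -> Prop) (l : list T) :
  exists l', NoDup l' /\ forall x, In x l' <-> In x l /\ A x.
Proof.
  induction l as [|a l [l' [N H]]].
  - exists nil; split; [constructor|]. simpl; tauto.
  - destruct (classic (A a /\ ~ In a l')) as [[Aa Ni]|Hn].
    + exists (a :: l'); split; [constructor; auto|].
      intros x; simpl; rewrite H; split.
      * intros [<-|[Hx Ax]]; auto.
      * intros [[<-|Hx] Ax]; auto.
    + exists l'; split; auto. intros x; rewrite H; simpl; split.
      * intros [Hx Ax]; auto.
      * intros [[Ea|Hx] Ax]; [subst x|auto].
        destruct (classic (In a l')) as [Hi|Hi].
        -- apply H in Hi; destruct Hi; auto.
        -- exfalso; apply Hn; auto.
Qed.

Lemma ncard_spec {T : Type} (A : T -> Prop) : is_finite A ->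
  exists l, NoDup l /\ (forall x, In x l <-> A x) /\ ncard A = length l.
Proof.
  intros [l Hl]. destruct (exists_nodup_sub A l) as [l' [N H]].
  assert (H' : forall x, In x l' <-> A x).
  { intros x; rewrite H; split; [tauto|]; intros Ax; split; auto. }
  exists l'; split; auto; split; auto.
  unfold ncard.
  destruct (epsilon_spec (inhabits 0%nat)
    (fun n => exists l : list T, NoDup l /\ length l = n /\ forall x, In x l <-> A x))
    as [l2 [N2 [L2 H2]]].
  { exists (length l'), l'; auto. }
  rewrite <- L2. apply Nat.le_antisymm; apply NoDup_incl_length; auto;
    intros x Hx; [apply H', H2 | apply H2, H']; auto.
Qed.

Lemma preimage_list {V G : Type} (phi : V -> G) :
  (forall x y, phi x = phi y -> x = y) ->
  forall l : list G, exists lv : list V, forall x, In (phi x) l -> In x lv.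
Proof.
  intros Inj l; induction l as [|g l [lv H]].
  - exists nil; simpl; tauto.
  - destruct (classic (exists x, phi x = g)) as [[x0 Hx0]|Hn].
    + exists (x0 :: lv); intros x [Hx|Hx]; simpl; auto.
      left; apply Inj; congruence.
    + exists lv; intros x [Hx|Hx]; auto. exfalso; eauto.
Qed.

Lemma arch_nat r : exists N : nat, r <= INR N.
Proof.
  destruct (Rle_dec r 0) as [H|H].
  - exists 0%nat; simpl; lra.
  - destruct (archimed r) as [H1 _].
    assert (Hz : (0 <= up r)%Z).
    { apply le_IZR. simpl. lra. }
    exists (Z.to_nat (up r)). rewrite INR_IZR_INZ, Z2Nat.id; auto. lra.
Qed.

Section Cayley.
Context {G : Type} (mul : G -> G -> G) (Sg : list G).

Fixpoint Tw (k : nat) (w : G) : list G :=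
  match k with
  | O => w :: nil
  | Datatypes.S k => flat_map (fun u => map (fun s => mul u s) Sg) (Tw k w)
  end.

Lemma flat_map_const_len {A B : Type} (f : A -> list B) c l :
  (forall u, length (f u) = c) -> length (flat_map f l) = (c * length l)%nat.
Proof.
  intros Hf; induction l; simpl; auto.
  rewrite length_app, Hf, IHl. lia.
Qed.

Lemma Tw_len k w : length (Tw k w) = (length Sg ^ k)%nat.
Proof.
  induction k; simpl; auto.
  rewrite (flat_map_const_len _ (length Sg)); [|intros; apply length_map].
  rewrite IHk; lia.
Qed.

Lemma walk_Tw k z w : walk (cayley_adj mul Sg) k z w -> In z (Tw k w).
Proof.
  induction 1.
  - simpl; auto.
  - simpl. apply in_flat_map. exists y; split; auto.
    destruct H as [s [Hs ->]]. apply in_map_iff; eauto.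
Qed.

Definition Lw (N : nat) (w : G) := flat_map (fun k => Tw k w) (seq 0 (Datatypes.S N)).

Lemma Lw_len_gen l w w' :
  length (flat_map (fun k => Tw k w) l) = length (flat_map (fun k => Tw k w') l).
Proof.
  induction l; simpl; auto. rewrite !length_app, IHl, !Tw_len; auto.
Qed.

Lemma Lw_len N w w' : length (Lw N w) = length (Lw N w').
Proof. apply Lw_len_gen. Qed.

Lemma in_Lw N z w : (forall x y, exists n, walk (cayley_adj mul Sg) n x y) ->
  INR (gdist (cayley_adj mul Sg) z w) <= INR N -> In z (Lw N w).
Proof.
  intros C Hd. apply INR_le in Hd.
  destruct (gdist_spec _ z w (C z w)) as [W _].
  unfold Lw. apply in_flat_map. exists (gdist (cayley_adj mul Sg) z w); split.
  - apply in_seq; lia.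
  - apply walk_Tw; auto.
Qed.
End Cayley.

Lemma cayley_walk {G : Type} (mul : G -> G -> G) (one : G) (S : list G) :
  (forall x, mul x one = x) -> (forall x y z, mul x (mul y z) = mul (mul x y) z) ->
  forall w, Forall (fun s => In s S) w -> forall y,
    walk (cayley_adj mul S) (length w) (mul y (fold_right mul one w)) y.
Proof.
  intros H1 HA w Hw; induction Hw; intros y; simpl.
  - rewrite H1; apply walk0.
  - rewrite HA. apply walk_snoc with (mul y x); auto.
    exists x; auto.
Qed.

Theorem lemma4p3
  (V : Type) (adjX : V -> V -> Prop)
  (G : Type) (mul : G -> G -> G) (one : G) (inv : G -> G) (S : list G)
  (a b : R) (phi : V -> G) :
  is_graph adjX -> bounded_geometry adjX ->
  is_group mul one inv -> sym_generating mul one inv S ->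
  poly_growth mul one S ->
  (forall x y, phi x = phi y -> x = y) ->
  rough_isom adjX (cayley_adj mul S) a b phi ->
  exists C1 C2 R1 : R, 0 < C1 < 1 /\ 0 < C2 /\
    forall (y : G) (p : V),
      INR (gdist (cayley_adj mul S) (phi p) y) <= b ->
      forall r : R, R1 <= r ->
        INR (ncard (ball adjX p r)) >=
        C2 * INR (ncard (ball (cayley_adj mul S) y (C1 * r))).
Proof.
  intros [_ [_ [_ cX]]] _ [HA [H1l [H1r [HVl HVr]]]] [Sinv Sgen] _ Inj
    [Ha [Hb [Hri Hsurj]]].
  set (cay := cayley_adj mul S).
  assert (cG : forall x y, exists n, walk cay n x y).
  { intros x y. destruct (Sgen (mul (inv y) x)) as [w [Hw E]].
    exists (length w).
    assert (Ex : x = mul y (fold_right mul one w)).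
    { rewrite <- E, HA, HVr, H1l; auto. }
    rewrite Ex at 1. apply cayley_walk; auto. }
  assert (symG : forall u v, cay u v -> cay v u).
  { intros u v [s [Hs ->]]. exists (inv s); split; auto.
    rewrite <- HA, HVr, H1r; auto. }
  destruct (arch_nat b) as [N HN].
  set (K := length (Lw mul S N one)).
  exists (/ (2 * a)), (/ (INR K + 1)), (6 * a * b).
  assert (HK : 0 <= INR K) by apply pos_INR.
  split; [split|split].
  - apply Rinv_0_lt_compat; lra.
  - rewrite <- Rinv_1. apply Rinv_lt_contravar; lra.
  - apply Rinv_0_lt_compat; lra.
  - intros y p Hpy r Hr.
    destruct (arch_nat (a * r + b)) as [N' HN'].
    destruct (preimage_list phi Inj (Lw mul S N' (phi p))) as [lv Hlv].
    assert (FX : is_finite (ball adjX p r)).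
    { exists lv. intros x Hx. apply Hlv. apply in_Lw; auto.
      unfold ball in Hx. destruct (Hri x p) as [_ Hup].
      assert (a * INR (gdist adjX x p) <= a * r) by (apply Rmult_le_compat_l; lra).
      unfold cay in *; lra. }
    destruct (arch_nat (/ (2 * a) * r)) as [N'' HN''].
    assert (FG : is_finite (ball cay y (/ (2 * a) * r))).
    { exists (Lw mul S N'' y). intros z Hz. apply in_Lw; auto.
      unfold ball in Hz. unfold cay in *; lra. }
    destruct (ncard_spec _ FX) as [lX [NX [HX EX]]].
    destruct (ncard_spec _ FG) as [lG [NG [HG EG]]].
    fold cay. rewrite EX, EG.
    assert (Inc : incl lG (flat_map (fun x => Lw mul S N (phi x)) lX)).
    { intros z Hz. apply HG in Hz. unfold ball in Hz.
      destruct (Hsurj z) as [x Hx].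
      apply in_flat_map. exists x; split.
      2:{ apply in_Lw; auto. unfold cay in *; lra. }
      apply HX. unfold ball.
      destruct (Hri x p) as [Hlo _]. fold cay in Hlo, Hx, Hpy.
      pose proof (gdist_tri cay cG (phi x) z (phi p)) as T1.
      pose proof (gdist_tri cay cG z y (phi p)) as T2.
      rewrite (gdist_sym cay cG (phi x) z symG) in T1.
      rewrite (gdist_sym cay cG y (phi p) symG) in T2.
      apply le_INR in T1. apply le_INR in T2. rewrite plus_INR in T1, T2.
      set (d := INR (gdist adjX x p)) in *.
      assert (Hd : / a * d <= 3 * b + / (2 * a) * r) by lra.
      assert (E1 : d = a * (/ a * d)) by (field; lra).
      assert (E2 : a * (/ (2 * a) * r) = r / 2) by (field; lra).
      assert (a * (/ a * d) <= a * (3 * b + / (2 * a) * r))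
        by (apply Rmult_le_compat_l; lra).
      assert (0 <= a * b) by nra.
      nra. }
    pose proof (NoDup_incl_length NG Inc) as Inc2. clear Inc. rename Inc2 into Inc.
    rewrite (flat_map_const_len (fun x => Lw mul S N (phi x)) K) in Inc
      by (intros; apply Lw_len).
    apply le_INR in Inc. rewrite mult_INR in Inc.
    set (c := / (INR K + 1)).
    assert (Hc : c * (INR K + 1) = 1) by (unfold c; field; lra).
    assert (Hc0 : 0 < c) by (unfold c; apply Rinv_0_lt_compat; lra).
    assert (HX0 : 0 <= INR (length lX)) by apply pos_INR.
    assert (c * INR (length lG) <= c * (INR K * INR (length lX)))
      by (apply Rmult_le_compat_l; lra).
    nra.
Qed.
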